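(* Let $X$ be a non-empty set and let $\mathcal{U}\subseteq P(X)$ be anti-closed under arbitrary unions. Then $\mathcal{U}$ is anti-closed under finite intersections.
   Context: For a family $\mathcal{U}\subseteq P(X)$: $\mathcal{U}$ is anti-closed under finite intersections if for every $n\in\mathbb{N}$ and all $A_1,\dots,A_n\in\mathcal{U}$ that are not all equal, $\bigcap_{i=1}^n A_i\notin\mathcal{U}$; $\mathcal{U}$ is anti-closed under arbitrary intersections if for every non-empty index set $J$ and all $A_i\in\mathcal{U}$ ($i\in J$) not all equal, $\bigcap_{i\in J}A_i\notin\mathcal{U}$; $\mathcal{U}$ is anti-closed under arbitrary unions if for every non-empty index set $J$ and all $A_i\in\mathcal{U}$ ($i\in J$) not all equal, $\bigcup_{i\in J}A_i\notin\mathcal{U}$. *)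

(* Defs.v *)
From mathcomp Require Import all_boot.
From mathcomp Require Import boolp classical_sets.
Set Implicit Arguments. Unset Strict Implicit. Unset Printing Implicit Defensive.
Local Open Scope classical_set_scope.

Definition anti_closed_finite_inter (X : Type) (U : set (set X)) : Prop :=
  forall (n : nat) (A : 'I_n -> set X),
    (forall i, U (A i)) ->
    (exists i j, A i <> A j) ->
    ~ U (\bigcap_(i in [set: 'I_n]) A i).

Definition anti_closed_arbitrary_unions (X : Type) (U : set (set X)) : Prop :=
  forall (J : Type) (A : J -> set X),
    inhabited J ->
    (forall i, U (A i)) ->
    (exists i j, A i <> A j) ->
    ~ U (\bigcup_(i in [set: J]) A i).

(* Main.v *)
Require Import Defs.
From mathcomp Require Import all_boot.
From mathcomp Require Import boolp classical_sets.
Local Open Scope classical_set_scope.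

Theorem mainTheorem5 (X : Type) (hX : inhabited X) (U : set (set X)) :
  anti_closed_arbitrary_unions U -> anti_closed_finite_inter U.
Proof.
move=> HU n A HA [i [j Hij]] HB.
set B := \bigcap_(k in [set: 'I_n]) A k in HB.
have sub : forall k, B `<=` A k by move=> k x Bx; apply: Bx.
have [k Hk] : exists k, B <> A k.
  case: (pselect (B = A i)) => Hi; last by exists i.
  exists j => Hj; apply: Hij; by rewrite -Hi -Hj.
have := HU bool (fun b => if b then B else A k) (inhabits true).
have -> : \bigcup_(b in [set: bool]) (if b then B else A k) = A k.
  apply/seteqP; split => x.
    by case=> [[]] _ //= /sub.
  by move=> Ax; exists false.
apply => //.
- by case.
- by exists true, false.
Qed.
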